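(* Let $\mathbf{M}$ be a POMDP, let $k\in\mathbb{N}$, and let $\mathbf{C}=(\mathcal{Q},q_1,\gamma,\delta)$ be a deterministic $k$-FSC for $\mathbf{M}$ with corresponding instantiation $u_{\mathbf{C}}$. Then for every $t\in\mathbb{N}$ (with $t\ge 2$), \[ H^{\mathbf{C}}(S_{t} \mid S^{t-1})= H^{u_{\mathbf{C}}}(S_{\mathbf{M},k,t} \mid S_{\mathbf{M},k, t-1}). \]
   Context: A POMDP is $\mathbf{M}=(\mathcal{S},s_I,\mathcal{A},P,\mathcal{Z},O,R)$ with finite state set $\mathcal{S}$, initial state $s_I$, finite action set $\mathcal{A}$, transition function $P_{s,a,s'}=P(s'|s,a)$, finite observation set $\mathcal{Z}$, observation function $O_{s,z}=O(z|s)$, reward $R:\mathcal{S}\times\mathcal{A}\to\mathbb{R}$. A $k$-finite-state controller ($k$-FSC) is $\mathbf{C}=(\mathcal{Q},q_1,\gamma,\delta)$ with memory states $\mathcal{Q}=\{q_1,\ldots,q_k\}$, initial memory state $q_1$, decision function $\gamma:\mathcal{Q}\times\mathcal{Z}\to\Delta(\mathcal{A})$ and memory transition function $\delta:\mathcal{Q}\times\mathcal{Z}\times\mathcal{A}\to\Delta(\mathcal{Q})$. Under $\mathbf{C}$ the POMDP evolves as: $S_1=s_I$, memory $Q_1=q_1$; at time $t$, $Z_t\sim O(\cdot|S_t)$, $A_t\sim\gamma(\cdot|Q_t,Z_t)$, $S_{t+1}\sim P(\cdot|S_t,A_t)$, $Q_{t+1}\sim\delta(\cdot|Q_t,Z_t,A_t)$.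 $H^{\mathbf{C}}(S_t\mid S^{t-1})$ is the conditional entropy of $S_t$ given $S^{t-1}=(S_1,\ldots,S_{t-1})$ in this process. For $q\in\mathcal{Q}$ let $Succ(q)=\{q'\in\mathcal{Q}:\delta(q'|q,z,a)>0 \text{ for some } z\in\mathcal{Z},a\in\mathcal{A}\}$; $\mathbf{C}$ is a deterministic $k$-FSC if $|Succ(q)|=1$ for all $q\in\mathcal{Q}$. The instantiation $u_{\mathbf{C}}$ determines the Markov chain $\mathbf{D}_{\mathbf{M},k}[u_{\mathbf{C}}]$ with state space $\mathcal{S}\times\mathcal{Q}$, initial state $\langle s_I,q_1\rangle$ and transition probabilities \[ P^{u_{\mathbf{C}}}_{\mathbf{M},k}(\langle s',q'\rangle\mid\langle s,q\rangle)=\sum_{a\in\mathcal{A}}\sum_{z\in\mathcal{Z}} O_{s,z}\,P_{s,a,s'}\,\gamma(a|q,z)\,\delta(q'|q,z,a). \] $(S_{\mathbf{M},k,1},S_{\mathbf{M},k,2},\ldots)$ is the state sequence of this Markov chain, and $H^{u_{\mathbf{C}}}(S_{\mathbf{M},k,t}\mid S_{\mathbf{M},k,t-1})$ is the corresponding conditional entropy (convention $0\log 0=0$). *)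

(* Defs.v *)
From HB Require Import structures.
From mathcomp Require Import all_boot all_order all_algebra.
From mathcomp Require Import reals exp.
Set Implicit Arguments. Unset Strict Implicit. Unset Printing Implicit Defensive.
Import Order.TTheory GRing.Theory Num.Theory.
Local Open Scope ring_scope.

Section Defs.
Variable R : realType.

Definition is_distr (T : finType) (p : T -> R) : Prop :=
  (forall x, 0 <= p x) /\ \sum_x p x = 1.

Record POMDP (S A Z : finType) := MkPOMDP {
  pm_sI : S;
  pm_P  : S -> A -> S -> R;   (* pm_P s a s' = P(s'|s,a) *)
  pm_O  : S -> Z -> R;        (* pm_O s z = O(z|s) *)
  pm_R  : S -> A -> R }.

Definition POMDP_wf (S A Z : finType) (M : POMDP S A Z) : Prop :=
  (forall s a, is_distr (pm_P M s a)) /\ (forall s, is_distr (pm_O M s)).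

Record FSC (A Z : finType) (k : nat) := MkFSC {
  fsc_q1    : 'I_k;
  fsc_gamma : 'I_k -> Z -> A -> R;          (* gamma(a|q,z) *)
  fsc_delta : 'I_k -> Z -> A -> 'I_k -> R }. (* delta(q'|q,z,a) *)

Definition FSC_wf (A Z : finType) k (C : FSC A Z k) : Prop :=
  (forall q z, is_distr (fsc_gamma C q z)) /\
  (forall q z a, is_distr (fsc_delta C q z a)).

Definition Succ (A Z : finType) k (C : FSC A Z k) (q : 'I_k) : {set 'I_k} :=
  [set q' | [exists z, exists a, 0 < fsc_delta C q z a q']].

Definition deterministic_FSC (A Z : finType) k (C : FSC A Z k) : Prop :=
  forall q : 'I_k, #|Succ C q| = 1%N.

(* Conditional entropy H(Y|X) of a joint distribution p(x,y) on X * Y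
   (natural logarithm; terms with p(x,y) = 0 vanish, i.e. 0 log 0 = 0). *)
Definition cond_entropy (X Y : finType) (p : X -> Y -> R) : R :=
  - \sum_x \sum_y
      (if p x y == 0 then 0 else p x y * ln (p x y / \sum_y' p x y')).

Variables (S A Z : finType) (k : nat) (M : POMDP S A Z) (C : FSC A Z k).

(* Joint law of (S_1..S_{n+1}, Q_1..Q_{n+1}, Z_1..Z_{n+1}, A_1..A_{n+1})
   in the POMDP under C (index i : 'I_n.+1 stands for time i+1). *)
Definition traj_prob (n : nat) (s : {ffun 'I_n.+1 -> S}) (q : {ffun 'I_n.+1 -> 'I_k})
    (z : {ffun 'I_n.+1 -> Z}) (a : {ffun 'I_n.+1 -> A}) : R :=
  ((s ord0 == pm_sI M) && (q ord0 == fsc_q1 C))%:R *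
  (\prod_(i < n.+1) (pm_O M (s i) (z i) * fsc_gamma C (q i) (z i) (a i))) *
  (\prod_(i < n)
     (pm_P M (s (inord i)) (a (inord i)) (s (inord i.+1)) *
      fsc_delta C (q (inord i)) (z (inord i)) (a (inord i)) (q (inord i.+1)))).

Definition state_seq_prob (n : nat) (s : {ffun 'I_n.+1 -> S}) : R :=
  \sum_(q : {ffun 'I_n.+1 -> 'I_k}) \sum_(z : {ffun 'I_n.+1 -> Z})
    \sum_(a : {ffun 'I_n.+1 -> A}) @traj_prob n s q z a.

Definition snoc_seq (n : nat) (x : {ffun 'I_n.+1 -> S}) (y : S)
  : {ffun 'I_n.+2 -> S} :=
  [ffun i => if unlift ord_max i is Some j then x j else y].

(* H^C(S_t | S^{t-1}) for t = n+2. *)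
Definition H_FSC (n : nat) : R :=
  cond_entropy (fun (x : {ffun 'I_n.+1 -> S}) (y : S) =>
                  @state_seq_prob n.+1 (snoc_seq x y)).

Definition chain_P (x y : S * 'I_k) : R :=
  \sum_(a : A) \sum_(z : Z)
    pm_O M x.1 z * pm_P M x.1 a y.1 * fsc_gamma C x.2 z a * fsc_delta C x.2 z a y.2.

(* chain_dist n = law of S_{M,k,n+1}. *)
Fixpoint chain_dist (n : nat) : S * 'I_k -> R :=
  match n with
  | 0 => fun x => (x == (pm_sI M, fsc_q1 C))%:R
  | m.+1 => fun y => \sum_x chain_dist m x * chain_P x y
  end.

(* H^{u_C}(S_{M,k,t} | S_{M,k,t-1}) for t = n+2. *)
Definition H_chain (n : nat) : R :=
  cond_entropy (fun x y : S * 'I_k => chain_dist n x * chain_P x y).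

End Defs.

(* Main.v *)
Require Import Defs.
From mathcomp Require Import all_boot all_order all_algebra.
From mathcomp Require Import reals exp.
From mathcomp Require Import ring.
Set Implicit Arguments. Unset Strict Implicit. Unset Printing Implicit Defensive.
Import Order.TTheory GRing.Theory Num.Theory.
Local Open Scope ring_scope.

Lemma sum_pair (R : realType) (X Y : finType) (G : X * Y -> R) :
  \sum_x G x = \sum_a \sum_b G (a, b).
Proof. by rewrite pair_bigA; apply eq_bigr => -[]. Qed.

Lemma cond_entropy_fact (R : realType) (X Y : finType) (p : X -> Y -> R) (m : X -> R) (K : X -> Y -> R) :
 (forall x y, p x y = m x * K x y) -> (forall x, \sum_y K x y = 1) ->
 cond_entropy p = - \sum_x \sum_y m x * K x y * ln (K x y).
Proof.
move=> Hp HK; rewrite /cond_entropy; congr (- _); apply eq_bigr => x _; apply eq_bigr => y _.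
rewrite (eq_bigr (fun y' => m x * K x y')) // -mulr_sumr HK mulr1 Hp.
case: eqP => [->|/eqP h]; first by rewrite mul0r.
have hm : m x != 0 by apply/eqP => e; rewrite e mul0r eqxx in h.
by rewrite [m x * _]mulrC mulfK.
Qed.

Section Snoc.
Variables (R : realType) (S : finType) (n : nat).

Lemma snocK (x : {ffun 'I_n.+1 -> S}) y (i : 'I_n.+1) :
  snoc_seq x y (widen_ord (leqnSn _) i) = x i.
Proof.
rewrite /snoc_seq ffunE.
have -> : widen_ord (leqnSn _) i = lift ord_max i by apply: val_inj; rewrite [RHS]lift_max.
by rewrite liftK.
Qed.

Lemma snoc_max (x : {ffun 'I_n.+1 -> S}) y : snoc_seq x y ord_max = y.
Proof. by rewrite /snoc_seq ffunE unlift_none. Qed.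

Lemma snoc_inord (x : {ffun 'I_n.+1 -> S}) y m : (m <= n)%N ->
  snoc_seq x y (inord m) = x (inord m).
Proof.
move=> Hm; rewrite -(snocK x y); congr (snoc_seq x y _); apply: val_inj.
by rewrite /= !inordK // ltnS // ltnW.
Qed.

Lemma snoc_inord_max (x : {ffun 'I_n.+1 -> S}) y : snoc_seq x y (inord n.+1) = y.
Proof.
rewrite -[RHS](snoc_max x y); congr (snoc_seq x y _); apply: val_inj.
by rewrite /= inordK.
Qed.

Lemma sum_snoc (F : {ffun 'I_n.+2 -> S} -> R) :
  \sum_w F w = \sum_x \sum_y F (snoc_seq x y).
Proof.
rewrite pair_bigA /= (reindex (fun p : {ffun 'I_n.+1 -> S} * S => snoc_seq p.1 p.2)) //.
apply: onW_bij.
exists (fun w : {ffun 'I_n.+2 -> S} => ([ffun i : 'I_n.+1 => w (widen_ord (leqnSn _) i)], w ord_max)).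
  move=> [x y] /=; congr pair; last exact: snoc_max.
  by apply/ffunP => i; rewrite ffunE snocK.
move=> w; apply/ffunP => j; rewrite /snoc_seq ffunE /=.
case: unliftP => [j' ->|->]; rewrite ?ffunE //.
by congr (w _); apply: val_inj; rewrite [RHS]lift_max.
Qed.
End Snoc.

Section P.
Variables (R : realType) (S A Z : finType) (k : nat) (M : POMDP R S A Z) (C : FSC R A Z k).
Hypotheses (HM : POMDP_wf M) (HC : FSC_wf C) (HD : deterministic_FSC C).

Definition fq (q : 'I_k) : 'I_k := odflt q [pick q' in Succ C q].

Lemma SuccE q : Succ C q = [set fq q].
Proof.
have /cards1P [x Hx] : #|Succ C q| == 1%N by rewrite HD.
by rewrite /fq Hx; case: pickP => [y|/(_ x)]; rewrite ?in_set1 ?eqxx // => /eqP ->.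
Qed.

Lemma deltaE q z a q' : fsc_delta C q z a q' = (q' == fq q)%:R.
Proof.
have [Hg Hd] := HC.
have H0 : forall q'', q'' != fq q -> fsc_delta C q z a q'' = 0.
  move=> q'' Hne; have [/(_ q'') Hp _] := Hd q z a.
  apply/eqP; rewrite eq_le Hp andbT leNgt; apply/negP => Hlt.
  have : q'' \in Succ C q by rewrite inE; apply/existsP; exists z; apply/existsP; exists a.
  by rewrite SuccE in_set1 (negbTE Hne).
case: eqP => [->|/eqP Hne]; last by rewrite H0.
have [_ Hs] := Hd q z a.
by rewrite (bigD1 (fq q)) //= big1 ?addr0 // in Hs => i /H0.
Qed.

Definition T q s s' := \sum_(a : A) \sum_(z : Z) pm_O M s z * pm_P M s a s' * fsc_gamma C q z a.

Lemma chain_PE x y : chain_P M C x y = (y.2 == fq x.2)%:R * T x.2 x.1 y.1.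
Proof.
rewrite /chain_P /T mulr_sumr; apply eq_bigr => a _; rewrite mulr_sumr; apply eq_bigr => z _.
by rewrite deltaE mulrC.
Qed.

Lemma Tsum q s : \sum_s' T q s s' = 1.
Proof.
have [HP HO] := HM; have [Hg _] := HC.
rewrite /T exchange_big /=.
transitivity (\sum_(a : A) \sum_(z : Z) pm_O M s z * fsc_gamma C q z a).
  apply eq_bigr => a _; rewrite exchange_big /=; apply eq_bigr => z _.
  rewrite (eq_bigr (fun s' => pm_O M s z * fsc_gamma C q z a * pm_P M s a s')); last first.
    by move=> s' _; rewrite mulrAC.
  by rewrite -mulr_sumr (proj2 (HP s a)) mulr1.
rewrite exchange_big /= -(proj2 (HO s)); apply eq_bigr => z _.
by rewrite -mulr_sumr (proj2 (Hg q z)) mulr1.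
Qed.

Definition qs n := iter n fq (fsc_q1 C).

Lemma chain_supp n s q : q != qs n -> chain_dist M C n (s, q) = 0.
Proof.
elim: n s q => [|n IH] s q Hq /=.
  by rewrite xpair_eqE (negbTE Hq) andbF.
apply: big1 => -[s0 q0] _.
have [->|Hne] := eqVneq q0 (qs n).
  by rewrite chain_PE /= (negbTE Hq) mul0r mulr0.
by rewrite IH // mul0r.
Qed.

Lemma chain_step n y : chain_dist M C n.+1 (y, qs n.+1) =
  \sum_s chain_dist M C n (s, qs n) * T (qs n) s y.
Proof.
rewrite /= sum_pair.
apply eq_bigr => s _; rewrite (bigD1 (qs n)) //= big1 ?addr0.
  by rewrite chain_PE /= eqxx mul1r.
by move=> q Hq; rewrite chain_supp // mul0r.
Qed.
Definition mu n (s : {ffun 'I_n.+1 -> S}) :=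
  (s ord0 == pm_sI M)%:R * \prod_(i < n) T (qs i) (s (inord i)) (s (inord i.+1)).

Lemma prod_if n (g : nat -> R) :
  \prod_(i < n.+1) (if (i < n)%N then g i else 1) = \prod_(i < n) g i.
Proof. by rewrite big_ord_recr /= ltnn mulr1; apply eq_bigr => i _; rewrite /= ltn_ord. Qed.

Lemma state_seq_probE n (s : {ffun 'I_n.+1 -> S}) : state_seq_prob M C s = mu s.
Proof.
pose F (q : {ffun 'I_n.+1 -> 'I_k}) (i : 'I_n.+1) z a :=
  pm_O M (s i) z * fsc_gamma C (q i) z a *
  (if (i < n)%N then pm_P M (s (inord i)) a (s (inord i.+1)) *
                 fsc_delta C (q (inord i)) z a (q (inord i.+1)) else 1).
have stepA : forall q, \sum_z \sum_a traj_prob M C s q z a =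
   ((s ord0 == pm_sI M) && (q ord0 == fsc_q1 C))%:R * \prod_(i < n.+1) \sum_z \sum_a F q i z a.
  move=> q; rewrite bigA_distr_bigA mulr_sumr; apply eq_bigr => zf _.
  rewrite (bigA_distr_bigA (fun i a => F q i (zf i) a)) mulr_sumr; apply eq_bigr => af _.
  transitivity (((s ord0 == pm_sI M) && (q ord0 == fsc_q1 C))%:R * \prod_i F q i (zf i) (af i)); last by [].
  rewrite /traj_prob -mulrA; congr (_ * _).
  rewrite /F [RHS]big_split /=; congr (_ * _).
  rewrite -(@prod_if n (fun i => pm_P M (s (inord i)) (af (inord i)) (s (inord i.+1)) *
      fsc_delta C (q (inord i)) (zf (inord i)) (af (inord i)) (q (inord i.+1)))).
  by apply eq_bigr => i _; case: ifP => //; rewrite !inord_val.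
have stepB : forall q (i : 'I_n.+1), \sum_z \sum_a F q i z a =
    if (i < n)%N then (q (inord i.+1) == fq (q (inord i)))%:R *
       T (q (inord i)) (s (inord i)) (s (inord i.+1)) else 1.
  move=> q i; rewrite /F; case: ifP => Hi.
    rewrite /T exchange_big /= mulr_sumr; apply eq_bigr => z _; rewrite mulr_sumr; apply eq_bigr => a _.
    rewrite deltaE !inord_val; ring.
  have [HP HO] := HM; have [Hg _] := HC.
  transitivity (\sum_z pm_O M (s i) z); last exact (proj2 (HO _)).
  apply eq_bigr => z _; under eq_bigr do rewrite mulr1.
  by rewrite -mulr_sumr (proj2 (Hg _ _)) mulr1.
have stepC : forall q : {ffun 'I_n.+1 -> 'I_k},
   ((s ord0 == pm_sI M) && (q ord0 == fsc_q1 C))%:R * \prod_(i < n.+1) \sum_z \sum_a F q i z a =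
   ((s ord0 == pm_sI M) && (q ord0 == fsc_q1 C))%:R * \prod_(i < n)
     ((q (inord i.+1) == fq (q (inord i)))%:R * T (q (inord i)) (s (inord i)) (s (inord i.+1))).
  move=> q; congr (_ * _).
  rewrite -(@prod_if n (fun m : nat => (q (inord m.+1) == fq (q (inord m)))%:R * T (q (inord m)) (s (inord m)) (s (inord m.+1)))).
  by apply eq_bigr => i _; rewrite stepB.
rewrite /state_seq_prob (eq_bigr _ (fun q _ => stepA q)) (eq_bigr _ (fun q _ => stepC q)).
pose qseq : {ffun 'I_n.+1 -> 'I_k} := [ffun i : 'I_n.+1 => qs i].
rewrite (bigD1 qseq) //= [X in _ + X]big1 ?addr0.
  rewrite /mu !ffunE /= eqxx andbT; congr (_ * _); apply eq_bigr => i _.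
  have Hi1 : (i < n.+1)%N by apply: ltnW; rewrite ltnS.
  have Hi2 : (i.+1 < n.+1)%N by rewrite ltnS.
  by rewrite !ffunE !inordK // /qs iterS eqxx mul1r.
move=> q Hq.
case H0: (q ord0 == fsc_q1 C); last by rewrite andbF mul0r.
case: (boolP [forall i : 'I_n, q (inord i.+1) == fq (q (inord i))]) => Hall.
  exfalso; move/eqP: Hq; apply; apply/ffunP => j; rewrite ffunE.
  suff H : forall m, (m < n.+1)%N -> q (inord m) = qs m.
    by have := H j (ltn_ord j); rewrite inord_val.
  elim => [|m IH] Hm.
    by rewrite (_ : inord 0 = ord0) ?(eqP H0) //; apply: val_inj; rewrite /= inordK.
  have Hm' : (m < n)%N by [].
  have := forallP Hall (Ordinal Hm'); rewrite /= => /eqP ->.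
  by rewrite IH // ltnW.
move/forallPn: Hall => [i Hi].
by rewrite (bigD1 i) //= (negbTE Hi) !mul0r mulr0.
Qed.
Lemma mu_snoc n (x : {ffun 'I_n.+1 -> S}) y :
  mu (snoc_seq x y) = mu x * T (qs n) (x ord_max) y.
Proof.
rewrite /mu big_ord_recr /=.
have E0 : snoc_seq x y ord0 = x ord0.
  by rewrite -(snocK x y); congr (snoc_seq x y _); apply: val_inj.
rewrite E0 -mulrA; congr (_ * _); congr (_ * _).
  by apply eq_bigr => i _; rewrite /= !snoc_inord // ltnW.
rewrite snoc_inord // snoc_inord_max; congr (T _ (x _) _); apply: val_inj.
by rewrite /= inordK.
Qed.

Definition nu (n : nat) (s : S) := chain_dist M C n (s, qs n).

Lemma marginal n (psi : S -> R) :
  \sum_(x : {ffun 'I_n.+1 -> S}) mu x * psi (x ord_max) = \sum_s nu n s * psi s.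
Proof.
elim: n psi => [|n IH] psi.
  transitivity (\sum_(x : {ffun 'I_1 -> S}) \prod_(i : 'I_1) ((x i == pm_sI M)%:R * psi (x i))).
    apply eq_bigr => x _; rewrite big_ord1 /mu big_ord0 mulr1.
    by rewrite (_ : ord_max = ord0) //; apply: val_inj.
  rewrite -(bigA_distr_bigA (fun (i : 'I_1) s => (s == pm_sI M)%:R * psi s)) big_ord1.
  by apply eq_bigr => s _; rewrite /nu /= xpair_eqE eqxx andbT.
rewrite sum_snoc.
under eq_bigr => x _ do under eq_bigr => y _ do rewrite mu_snoc snoc_max -mulrA.
under eq_bigr => x _ do rewrite -mulr_sumr.
rewrite (IH (fun s => \sum_y T (qs n) s y * psi y)).
under [RHS]eq_bigr => y _ do rewrite /nu chain_step mulr_suml.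
rewrite [RHS]exchange_big /=; apply eq_bigr => s _; rewrite mulr_sumr; apply eq_bigr => y _.
by rewrite mulrA.
Qed.

Definition phi n s := \sum_y T (qs n) s y * ln (T (qs n) s y).

Lemma H_FSC_eq n : H_FSC M C n = - \sum_s nu n s * phi n s.
Proof.
rewrite /H_FSC (@cond_entropy_fact _ _ _ _ (fun x => mu x) (fun x y => T (qs n) (x ord_max) y)).
- congr (- _).
  under eq_bigr => x _ do under eq_bigr => y _ do rewrite -mulrA.
  under eq_bigr => x _ do rewrite -mulr_sumr.
  exact: (marginal n (phi n)).
- by move=> x y; rewrite state_seq_probE mu_snoc.
- by move=> x; exact: Tsum.
Qed.

Lemma H_chain_eq n : H_chain M C n = - \sum_s nu n s * phi n s.
Proof.
rewrite /H_chain (@cond_entropy_fact _ _ _ _ (chain_dist M C n) (chain_P M C)) //; last first.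
  move=> x; rewrite sum_pair.
  transitivity (\sum_s' T x.2 x.1 s'); last exact: Tsum.
  apply eq_bigr => s' _; rewrite (bigD1 (fq x.2)) //= big1 ?addr0.
    by rewrite chain_PE /= eqxx mul1r.
  by move=> q' Hq'; rewrite chain_PE /= (negbTE Hq') mul0r.
congr (- _); rewrite sum_pair; apply eq_bigr => s _.
rewrite (bigD1 (qs n)) //= [X in _ + X]big1 ?addr0; last first.
  by move=> q Hq; rewrite chain_supp // big1 // => y _; rewrite !mul0r.
rewrite sum_pair /nu /phi mulr_sumr; apply eq_bigr => s' _.
rewrite (bigD1 (fq (qs n))) //= [X in _ + X]big1 ?addr0; last first.
  by move=> q' Hq'; rewrite chain_PE /= (negbTE Hq') !(mul0r, mulr0).
by rewrite chain_PE /= eqxx mul1r mulrA.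
Qed.
End P.

Theorem proposition1 (R : realType) (S A Z : finType) (k : nat)
  (M : POMDP R S A Z) (C : FSC R A Z k) :
  POMDP_wf M -> FSC_wf C -> deterministic_FSC C ->
  forall n : nat, (* t = n + 2 >= 2 *)
    H_FSC M C n = H_chain M C n.
Proof.
move=> HM HC HD n.
by rewrite (H_FSC_eq HM HC HD) (H_chain_eq HM HC HD).
Qed.
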